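(* Let trees $T_1,\dots,T_t$ be fixed as described below and let $A_G$ be the assignment produced by the greedy procedure described below. Then $z(A_G)\ge \frac12\max\{z(A):A\in\mathcal{M}\}$, i.e. the bandwidth cost reduced by the greedy assignment of branch state nodes is at least one half of the cost reduced by an optimal assignment of branch state nodes.
   Context: Setting: a directed graph $G=(V,E)$ with edge costs $k_e\ge0$ and node capacities $b_u\in\mathbb{Z}_{\ge0}$; for $i=1,\dots,t$ a directed out-tree $T_i\subseteq G$ rooted at a source $s_i$ and containing a destination set $D_i$. Let $W_i$ be the set of branch nodes of $T_i$ (nodes other than $s_i$ with at least three incident edges in $T_i$) and $W=\bigcup_i W_i$. For $A_i\subseteq W_i$ define $c(T_i,A_i)=\sum_{x\in A_i\cup D_i}c(P_x)$, where $P_x$ is the path in $T_i$ from the nearest proper ancestor of $x$ in $A_i\cup\{s_i\}$ to $x$ and $c(P_x)$ is the sum of the edge costs on $P_x$. Let $N=\{1,\dots,t\}\times W$; a set $A\subseteq N$ is a feasible assignment if $(i,w)\in A$ implies $w\in W_i$ and, for each $w\in W$, $|\{i:(i,w)\in A\}|\le b_w$; $\mathcal{M}$ is the family of feasible assignments. For $A\in\mathcal{M}$ put $A_i=\{w:(i,w)\in A\}$, $c(\mathcal{T},A)=\sum_i c(T_i,A_i)$, and $z(A)=c(\mathcal{T},\varnothing)-c(\mathcal{T},A)$. Greedy procedure: start with $A=\varnothing$; while there exists $x\in N\setminus A$ with $A\cup\{x\}\in\mathcal{M}$, add to $A$ such an element $x$ maximizing $z(A\cup\{x\})$; $A_G$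 is the final set. *)

(* Defs.v *)
From mathcomp Require Import all_boot all_order all_algebra.
Set Implicit Arguments. Unset Strict Implicit. Unset Printing Implicit Defensive.
Import Order.TTheory GRing.Theory Num.Theory.
Local Open Scope ring_scope.

Section Trees.
Variable V : finType.

(* A directed tree is given by its edge set T : {set V * V} and its root s. *)
Definition trel (T : {set V * V}) : rel V := fun x y => (x, y) \in T.

Definition tnodes (T : {set V * V}) (s : V) : {set V} :=
  [set x | connect (trel T) s x].

Definition is_outtree (E : rel V) (T : {set V * V}) (s : V) : Prop :=
  [/\ forall e, e \in T -> E e.1 e.2,
      forall x, (x, s) \notin T,
      forall x x' y, (x, y) \in T -> (x', y) \in T -> x = x'
    & forall x y, (x, y) \in T -> connect (trel T) s x].

Definition tdeg (T : {set V * V}) (x : V) : nat :=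
  #|[set e in T | (e.1 == x) || (e.2 == x)]|.

Definition branch_nodes (T : {set V * V}) (s : V) : {set V} :=
  [set x in tnodes T s | (x != s) && (3 <= tdeg T x)%N].

Definition is_leaf (T : {set V * V}) (s x : V) : bool :=
  [&& x \in tnodes T s, x != s & [forall y, (x, y) \notin T]].

Variable R : numDomainType.
Variable k : V -> V -> R.

(* cost of the tree path from an ancestor a to x: the tree edges (u,v) with
   u a descendant of a (or a itself) and v an ancestor of x (or x itself) *)
Definition pcost (T : {set V * V}) (a x : V) : R :=
  \sum_(e in T | connect (trel T) a e.1 && connect (trel T) e.2 x) k e.1 e.2.

Definition pancestors (T : {set V * V}) (S : {set V}) (x : V) : {set V} :=
  [set a in S | connect (trel T) a x && (a != x)].

Definition nearest (T : {set V * V}) (S : {set V}) (x : V) : option V :=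
  [pick a in pancestors T S x |
     [forall c in pancestors T S x, connect (trel T) c a]].

Definition Pcost (T : {set V * V}) (s : V) (A : {set V}) (x : V) : R :=
  if nearest T (s |: A) x is Some a then pcost T a x else 0.

Definition tree_cost (T : {set V * V}) (s : V) (D A : {set V}) : R :=
  \sum_(x in A :|: D) Pcost T s A x.

End Trees.

Section Assignment.
Variables (R : numDomainType) (V : finType) (k : V -> V -> R) (b : V -> nat)
          (t : nat) (s : 'I_t -> V) (T : 'I_t -> {set V * V})
          (D : 'I_t -> {set V}).

Definition Wi (i : 'I_t) : {set V} := branch_nodes (T i) (s i).
Definition Wall : {set V} := \bigcup_(i < t) Wi i.

Definition Nset : {set 'I_t * V} := [set p | p.2 \in Wall].

Definition feasible (A : {set 'I_t * V}) : bool :=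
  [forall p in A, p.2 \in Wi p.1] &&
  [forall w in Wall, #|[set i | (i, w) \in A]| <= b w]%N.

Definition Ai (A : {set 'I_t * V}) (i : 'I_t) : {set V} := [set w | (i, w) \in A].

Definition total_cost (A : {set 'I_t * V}) : R :=
  \sum_(i < t) tree_cost k (T i) (s i) (D i) (Ai A i).

Definition z (A : {set 'I_t * V}) : R := total_cost set0 - total_cost A.

(* [greedy_from A xs AG]: starting from the current set A, the greedy
   procedure successively adds the elements of xs (each one an admissible
   choice of the greedy rule, ties broken arbitrarily) and stops at AG
   when no element can be added any more. *)
Fixpoint greedy_from (A : {set 'I_t * V}) (xs : seq ('I_t * V))
  (AG : {set 'I_t * V}) : Prop :=
  match xs with
  | [::] => AG = A /\
      (forall y, y \in Nset -> y \notin A -> ~~ feasible (y |: A))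
  | x :: xs' =>
      [/\ x \in Nset, x \notin A, feasible (x |: A),
          (forall y, y \in Nset -> y \notin A -> feasible (y |: A) ->
                     z (y |: A) <= z (x |: A))
        & greedy_from (x |: A) xs' AG]
  end.

Definition greedy_output (AG : {set 'I_t * V}) : Prop :=
  exists xs, greedy_from set0 xs AG.

End Assignment.

(* Main.v *)
Require Import Defs.
From mathcomp Require Import all_boot all_order all_algebra.
From mathcomp Require Import zify lra.
Import Order.TTheory GRing.Theory Num.Theory.
Set Implicit Arguments. Unset Strict Implicit. Unset Printing Implicit Defensive.

Section TreeFacts.
Variables (V : finType) (T : {set V * V}) (s : V).
Hypothesis Hin : forall x, (x, s) \notin T.
Hypothesis Huniq : forall x x' y, (x, y) \in T -> (x', y) \in T -> x = x'.
Hypothesis Hreach : forall x y, (x, y) \in T -> connect (trel T) s x.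

Local Notation anc := (connect (trel T)).

Lemma anc_edge x y : (x, y) \in T -> anc x y.
Proof. by move=> H; apply: connect1. Qed.

Lemma connect_last a y : anc a y -> a != y -> exists p, (p, y) \in T /\ anc a p.
Proof.
move/connectP=> [pth Hp Hl]; move: Hp Hl.
case/lastP: pth => [|q z] /=; first by move=> _ ->; rewrite eqxx.
rewrite rcons_path last_rcons => /andP[Hq Hz] ->{y} _.
exists (last a q); split => //.
by apply/connectP; exists q.
Qed.

Lemma parent a y p : anc a y -> a != y -> (p, y) \in T -> anc a p.
Proof.
move=> Hay Hne Hp; have [p' [Hp' Hap']] := connect_last Hay Hne.
by rewrite (Huniq Hp Hp').
Qed.

Lemma chain a b x : anc a x -> anc b x -> anc a b || anc b a.
Proof.
move/connectP=> [pth Hp ->]; elim/last_ind: pth a b Hp => [|q z IH] a b /=.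
  by move=> _ ->; rewrite orbT.
rewrite rcons_path last_rcons => /andP[Hq Hz] Hb.
have [->|nbz] := eqVneq b z.
  by apply/orP; left; apply/connectP; exists (rcons q z); rewrite ?rcons_path ?Hq ?last_rcons.
by apply: IH => //; apply: parent Hb nbz Hz.
Qed.

Lemma nocycle v : anc s v -> forall u, (u, v) \in T -> ~~ anc v u.
Proof.
move/connectP=> [pth Hp ->]; elim/last_ind: pth Hp => [|q z IH] /=.
  by move=> _ u Hu; rewrite (negbTE (Hin u)) in Hu.
rewrite rcons_path last_rcons => /andP[Hq Hz] u Hu; apply/negP => Hzu.
have Eu := Huniq Hu Hz; subst u.
have [Ezp|nzp] := eqVneq z (last s q).
  have := IH Hq z; rewrite -Ezp in Hz * => H.
  by move: (H Hz); rewrite connect0.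
have [p' [Hp' Hzp']] := connect_last Hzu nzp.
move: (IH Hq p' Hp'); rewrite (connect_trans (anc_edge Hz) Hzp') //.
Qed.

Lemma anc_s x : anc s x = (x \in tnodes T s).
Proof. by rewrite inE. Qed.

Lemma antisym a b : anc s a -> anc a b -> anc b a -> a = b.
Proof.
move=> Hsa Hab Hba; apply/eqP/negPn/negP => nab.
have [p [Hp Hap]] := connect_last Hab nab.
have Hsb := connect_trans Hsa Hab.
by move: (nocycle Hsb Hp); rewrite (connect_trans Hba Hap).
Qed.

Lemma no_into_s a : anc a s -> a = s.
Proof.
move=> H; apply/eqP/negPn/negP => nas.
have [p [Hp _]] := connect_last H nas.
by rewrite (negbTE (Hin p)) in Hp.
Qed.

Lemma anc_s2 a x : anc s x -> anc a x -> anc s a.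
Proof.
move=> Hsx Hax; case/orP: (chain Hsx Hax) => // /no_into_s ->.
exact: connect0.
Qed.

Definition dep x := #|[set a | anc a x]|.

Lemma dep_lt a b : anc s a -> anc a b -> a != b -> (dep a < dep b)%N.
Proof.
move=> Hsa Hab nab; apply: proper_card; apply/properP; split.
  by apply/subsetP => c; rewrite !inE => Hca; apply: connect_trans Hca Hab.
exists b; first by rewrite inE connect0.
rewrite inE; apply/negP => Hba; move/eqP: nab; apply.
exact: antisym.
Qed.

Lemma edge_neq u v : anc s u -> (u, v) \in T -> u != v.
Proof.
move=> Hsu Huv; apply/negP => /eqP Euv; subst v.
by move: (nocycle (connect_trans Hsu (anc_edge Huv)) Huv); rewrite connect0.
Qed.

Lemma leaf_below w : w \in branch_nodes T s ->
  exists d, [/\ is_leaf T s d, anc w d & w != d].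
Proof.
rewrite inE => /andP[]; rewrite -anc_s => Hsw /andP[nws Hdeg].
have [c Hc] : exists c, (w, c) \in T.
  case: (pickP (fun c => (w, c) \in T)) => [c Hc|Hno]; first by exists c.
  suff : (tdeg T w <= 1)%N by rewrite leqNgt (leq_trans _ Hdeg).
  apply/card_le1_eqP => [[e1 e2] [e1' e2']]; rewrite !inE /=.
  have E : forall f1 f2, (f1, f2) \in T -> (f1 == w) || (f2 == w) -> f2 = w.
    move=> f1 f2 Hf /orP[/eqP Ef|/eqP //]; subst f1.
    by rewrite Hno in Hf.
  move=> /andP[He Hew] /andP[He' Hew'].
  have E1 := E _ _ He Hew; have E2 := E _ _ He' Hew'; subst e2 e2'.
  by rewrite (Huniq He He').
pose P := fun x => anc w x && (x != w).
have Pc : P c by rewrite /P (anc_edge Hc) eq_sym (edge_neq Hsw Hc).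
case: (arg_maxnP dep Pc) => d /andP[Hwd nwd] Hmax.
have Hsd := connect_trans Hsw Hwd.
exists d; split => //; last by rewrite eq_sym.
apply/and3P; split; first by rewrite -anc_s.
  apply/negP => /eqP Eds; subst d.
  by move/eqP: nws; apply; apply: no_into_s.
apply/forallP => y; apply/negP => Hdy.
have Hwy := connect_trans Hwd (anc_edge Hdy).
have nyw : y != w.
  apply/negP => /eqP Eyw; subst y.
  by move: (nocycle Hsw Hdy); rewrite Hwd.
move: (Hmax y); rewrite /P Hwy nyw => /(_ isT).
move=> H; move: (dep_lt Hsd (anc_edge Hdy) (edge_neq Hsd Hdy)).
by rewrite ltnNge; move: H => /= ->.
Qed.

Lemma highest (S Z : {set V}) u d : anc s u -> anc u d -> u != d -> d \in Z ->
  S \subset Z ->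
  exists z, [/\ z \in Z, anc u z, u != z, anc z d &
   forall y, y \in S -> anc u y -> u != y -> anc y z -> y != z -> False].
Proof.
move=> Hsu Hud nud Hd HSZ.
pose P := fun x => [&& x \in Z, anc u x, u != x & anc x d].
have Pd : P d by rewrite /P Hd Hud nud connect0.
case: (arg_minnP dep Pd) => z /and4P[Hz Huz nuz Hzd] Hmin.
exists z; split => // y Hy Huy nuy Hyz nyz.
have : P y by rewrite /P (subsetP HSZ _ Hy) Huy nuy (connect_trans Hyz Hzd).
move/Hmin => H; move: (dep_lt (connect_trans Hsu Huy) Hyz nyz).
by rewrite ltnNge H.
Qed.

Lemma forallU1 (P : pred V) w (S : {set V}) :
  [forall y in w |: S, P y] = P w && [forall y in S, P y].
Proof.
apply/forallP/andP => [H|[Hw H] y].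
  split; first by move: (H w); rewrite !inE eqxx.
  apply/forallP => y; apply/implyP => Hy.
  by move: (H y); rewrite !inE Hy orbT.
rewrite !inE; apply/implyP => /orP[/eqP->//|Hy].
exact: (implyP (forallP H y) Hy).
Qed.

Variable D : {set V}.

Definition slt x y := anc x y && (x != y).
Definition Q v (S : {set V}) := [set x in S :|: D | anc v x && [forall y in S, ~~ (anc v y && slt y x)]].
Definition free v (S : {set V}) w := [forall y in S, ~~ (anc v y && slt y w)].
Definition cc v (S : {set V}) w := anc v w && free v S w.
Definition B v (S : {set V}) w := [set x in Q v S | anc v w && slt w x].

Lemma inQ v (S : {set V}) x : (x \in Q v S) =
  [&& x \in S :|: D, anc v x & [forall y in S, ~~ (anc v y && slt y x)]].
Proof. by rewrite inE. Qed.

Lemma Q_add v (S : {set V}) w : w \notin S ->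
  (#|Q v S| + (cc v S w && (w \notin D)) = #|Q v (w |: S)| + #|B v S w|)%N.
Proof.
move=> nwS.
have E1 : Q v (w |: S) :\ w = (Q v S :\ w) :\: B v S w.
  apply/setP => x; rewrite !in_setD1 !in_setD !inQ forallU1.
  have [->|nxw] := eqVneq x w; first by rewrite /= in_set1 eqxx /= andbF.
  rewrite /B in_set inQ /slt !inE (negbTE nxw) /= (eq_sym w x) nxw.
  set F := [forall y in S, _].
  by case: F; case: ((x \in S) || (x \in D)); case: (anc v x); case: (anc v w);
     case: (anc w x).
have E2 : (Q v S :\ w) :&: B v S w = B v S w.
  apply/setIidPr/subsetP => x; rewrite /B in_set => /andP[HQ /andP[_ /andP[_ Hne]]].
  by rewrite in_setD1 eq_sym Hne HQ.
have E3 : (w \in Q v S) = (w \in D) && cc v S w.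
  rewrite inQ /cc /free !inE (negbTE nwS) /=.
  by case: (w \in D).
have E4 : (w \in Q v (w |: S)) = cc v S w.
  by rewrite inQ /cc /free forallU1 !inE eqxx /= /slt eqxx !andbF /=.
rewrite (cardsD1 w (Q v S)) (cardsD1 w (Q v (w |: S))) E1 E3 E4.
rewrite -(cardsID (B v S w) (Q v S :\ w)) E2.
by case: (cc v S w); case: (w \in D); rewrite /= ?addn0 ?add0n; lia.
Qed.

Lemma inB v (S : {set V}) w x :
  (x \in B v S w) = [&& x \in Q v S, anc v w & slt w x].
Proof. by rewrite in_set. Qed.

Lemma B_nonempty v (S : {set V}) w : anc s w ->
  (exists d, d \in D /\ anc w d /\ w != d) -> w \notin S -> cc v S w ->
  (0 < #|B v S w|)%N.
Proof.
move=> Hsw [d [Hd [Hwd nwd]]] nwS /andP[Hvw Hfree].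
have HdZ : d \in S :|: D by rewrite inE Hd orbT.
have [z [Hz Hwz nwz Hzd Hhi]] := @highest S (S :|: D) w d Hsw Hwd nwd
  HdZ (subsetUl S D).
apply/card_gt0P; exists z.
rewrite inB inQ Hz (connect_trans Hvw Hwz) Hvw /slt Hwz nwz /= andbT.
apply/forallP => y; apply/implyP => Hy; apply/negP => /and3P[Hvy Hyz nyz].
case/orP: (chain Hyz Hwz) => [Hyw|Hwy].
- have nyw : y != w by apply: contraNneq nwS => <-.
  by move: (forallP Hfree y); rewrite Hy Hvy /slt Hyw nyw.
- have nwy : w != y by apply: contraNneq nwS => ->.
  exact: (Hhi y Hy Hwy nwy Hyz nyz).
Qed.

Lemma B_cc v (S : {set V}) w : anc s w -> (0 < #|B v S w|)%N -> cc v S w.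
Proof.
move=> Hsw /card_gt0P [x]; rewrite inB inQ.
move=> /and3P[/and3P[_ Hvx Hf] Hvw /andP[Hwx nwx]].
rewrite /cc Hvw; apply/forallP => y; apply/implyP => Hy.
apply/negP; rewrite /slt => /and3P[Hvy Hyw nyw].
have nyx : y != x.
  apply/negP => /eqP Eyx; subst y.
  by move/eqP: nwx; apply; apply: antisym.
by move: (forallP Hf y); rewrite Hy Hvy /slt (connect_trans Hyw Hwx) nyx.
Qed.

Lemma free_sub v (S1 S2 : {set V}) w : S1 \subset S2 -> free v S2 w -> free v S1 w.
Proof.
move=> Hsub H; apply/forallP => y; apply/implyP => Hy.
exact: (implyP (forallP H y) (subsetP Hsub _ Hy)).
Qed.

Lemma B_inj v (S1 S2 : {set V}) w : S1 \subset S2 -> anc s w -> w \notin S2 ->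
  (forall y, y \in S2 -> anc s y /\ exists d, d \in D /\ anc y d /\ y != d) ->
  (#|B v S2 w| <= #|B v S1 w|)%N.
Proof.
move=> Hsub Hsw nwS2 HS2.
pose phi x := if x \in S1 :|: D then x
              else odflt x [pick z in B v S1 w | anc x z].
have Hphi : forall x, x \in B v S2 w -> phi x \in B v S1 w /\ anc x (phi x).
  move=> x; rewrite inB inQ => /and3P[/and3P[HxSD Hvx Hf] Hvw /andP[Hwx nwx]].
  rewrite /phi; case: ifP => HxSD1.
    split; last exact: connect0.
    rewrite inB inQ HxSD1 Hvx Hvw /slt Hwx nwx /= andbT.
    apply/forallP => y; apply/implyP => Hy.
    exact: (implyP (forallP Hf y) (subsetP Hsub _ Hy)).
  move: HxSD1; rewrite inE => /negbT; rewrite negb_or => /andP[nxS1 nxD].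
  have HxS2 : x \in S2 by move: HxSD; rewrite inE (negbTE nxD) orbF.
  have [Hsx [d [Hd [Hxd nxd]]]] := HS2 x HxS2.
  have HdZ : d \in S1 :|: D by rewrite inE Hd orbT.
  have [z [Hz Hxz nxz Hzd Hhi]] := @highest S1 (S1 :|: D) x d Hsx Hxd nxd
    HdZ (subsetUl _ _).
  have HzB : z \in B v S1 w.
    rewrite inB inQ Hz (connect_trans Hvx Hxz) Hvw /slt (connect_trans Hwx Hxz) /=.
    apply/andP; split; last first.
      apply/negP => /eqP Ewz; subst z.
      by move/eqP: nwx; apply; apply/esym/antisym.
    apply/forallP => y; apply/implyP => Hy.
    apply/negP => /and3P[Hvy Hyz nyz].
    case/orP: (chain Hyz Hxz) => [Hyx|Hxy].
    - have nyx : y != x by apply: contraNneq nxS1 => <-.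
      by move: (forallP Hf y); rewrite (subsetP Hsub _ Hy) Hvy /slt Hyx nyx.
    - have nxy : x != y by apply: contraNneq nxS1 => ->.
      exact: (Hhi y Hy Hxy nxy Hyz nyz).
  case: pickP => [z' /andP[Hz'B Hxz']|Hno] /=; first by [].
  by move: (Hno z); rewrite HzB Hxz.
have key : forall a b, a \in B v S2 w -> b \in B v S2 w -> phi a = phi b ->
    anc a b -> a = b.
  move=> a b Ha Hb Eab Hab; apply/eqP/negPn/negP => nab.
  move: Ha; rewrite inB inQ => /and3P[/and3P[HaSD Hva _] Hvw /andP[Hwa _]].
  move: (Hb); rewrite inB inQ => /and3P[/and3P[_ _ Hfb] _ _].
  have naS2 : a \notin S2.
    apply/negP => HaS2.
    by move: (forallP Hfb a); rewrite HaS2 (connect_trans Hvw Hwa) /slt Hab nab.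
  have HaD : a \in D by move: HaSD; rewrite inE (negbTE naS2).
  have Pa : phi a = a by rewrite /phi inE HaD orbT.
  have [_ Hb2] := Hphi b Hb.
  rewrite -Eab Pa in Hb2.
  by move/eqP: nab; apply; apply: antisym => //; apply: connect_trans Hsw Hwa.
have Hinj : {in B v S2 w &, injective phi}.
  move=> x x' Hx Hx' E.
  have [_ Hx2] := Hphi x Hx; have [_ Hx2'] := Hphi x' Hx'.
  rewrite -E in Hx2'.
  case/orP: (chain Hx2 Hx2') => H; first exact: key.
  by symmetry; apply: key.
rewrite -(card_in_imset Hinj); apply: subset_leq_card.
by apply/subsetP => _ /imsetP[x Hx ->]; case: (Hphi x Hx).
Qed.

Lemma setU1_in (S : {set V}) w : w \in S -> w |: S = S.
Proof. by move=> H; apply/setP => y; rewrite in_setU1; case: eqVneq => [->|]. Qed.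

Lemma Q_mono v (S : {set V}) w : anc s w ->
  (exists d, d \in D /\ anc w d /\ w != d) ->
  (#|Q v (w |: S)| <= #|Q v S|)%N.
Proof.
move=> Hsw Hd; case: (boolP (w \in S)) => HwS; first by rewrite setU1_in.
have E := Q_add v HwS.
case: (boolP (cc v S w)) => Hc.
  have := B_nonempty Hsw Hd HwS Hc; move: E; rewrite Hc /=.
  case: (w \notin D) => /=; lia.
by move: E; rewrite (negbTE Hc) /=; lia.
Qed.

Lemma Q_sub v (S1 S2 : {set V}) w : S1 \subset S2 -> anc s w ->
  (exists d, d \in D /\ anc w d /\ w != d) -> w \notin S2 ->
  (forall y, y \in S2 -> anc s y /\ exists d, d \in D /\ anc y d /\ y != d) ->
  (#|Q v S2| + #|Q v (w |: S1)| <= #|Q v S1| + #|Q v (w |: S2)|)%N.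
Proof.
move=> Hsub Hsw Hd nwS2 HS2.
have nwS1 : w \notin S1 by apply: contra nwS2; apply: (subsetP Hsub).
have E1 := Q_add v nwS1; have E2 := Q_add v nwS2.
have Hi := B_inj v Hsub Hsw nwS2 HS2.
have Hm := Q_mono v S1 Hsw Hd.
case: (boolP (cc v S2 w)) => Hc2.
  have Hc1 : cc v S1 w.
    by move: Hc2; rewrite /cc => /andP[-> /(free_sub Hsub)].
  move: E1 E2; rewrite Hc1 Hc2 /=; case: (w \notin D) => /=; lia.
have B0 : #|B v S2 w| = 0.
  apply/eqP; rewrite -leqn0 leqNgt; apply/negP => /(B_cc Hsw).
  by rewrite (negbTE Hc2).
move: E2; rewrite (negbTE Hc2) B0 /=; lia.
Qed.

End TreeFacts.

Local Open Scope ring_scope.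

Lemma mulrn_mono (R : numDomainType) (x : R) m n : 0 <= x -> (m <= n)%N -> x *+ m <= x *+ n.
Proof.
move=> Hx Hmn; rewrite -(subnKC Hmn) mulrnDr lerDl.
exact: mulrn_wge0.
Qed.

Section CostFacts.
Variables (R : realFieldType) (V : finType) (k : V -> V -> R) (T : {set V * V}) (s : V) (D : {set V}).
Hypothesis Hin : forall x, (x, s) \notin T.
Hypothesis Huniq : forall x x' y, (x, y) \in T -> (x', y) \in T -> x = x'.
Hypothesis Hreach : forall x y, (x, y) \in T -> connect (trel T) s x.

Local Notation anc := (connect (trel T)).
Local Notation Q := (Q T D).

Definition cond (S : {set V}) x (e : V * V) :=
  if nearest T (s |: S) x is Some a then anc a e.1 && anc e.2 x else false.

Lemma Pcost_eq S x : Pcost k T s S x = \sum_(e in T | cond S x e) k e.1 e.2.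
Proof.
rewrite /Pcost /cond; case: (nearest _ _ _) => [a|] //.
by rewrite big_pred0 // => e; rewrite andbF.
Qed.

Lemma cond_iff S x e : e \in T -> (x \in S :|: D) -> cond S x e = (x \in Q e.2 S).
Proof.
case: e => u v He HxSD /=.
have Hsu := Hreach He; have Huv := anc_edge He.
have Hsv := connect_trans Hsu Huv.
have nvs : v != s by apply: contraNneq (Hin u) => <-.
rewrite /cond /nearest; case: pickP => [a /andP[Ha Hall]|Hno].
  move: (Ha); rewrite inE => /andP[HaS /andP[Hax nax]].
  apply/idP/idP.
    move=> /andP[Hau Hvx]; rewrite inQ HxSD Hvx /=.
    apply/forallP => y; apply/implyP => Hy; apply/negP => /andP[Hvy /andP[Hyx nyx]].
    have Hyp : y \in pancestors T (s |: S) x by rewrite inE in_setU1 Hy orbT Hyx nyx.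
    have Hya := implyP (forallP Hall y) Hyp.
    move: (nocycle Hin Huniq Hsv He).
    by rewrite (connect_trans (connect_trans Hvy Hya) Hau).
  rewrite inQ => /and3P[_ Hvx Hf]; rewrite Hvx andbT.
  have nva : ~~ anc v a.
    apply/negP => Hva; move: HaS; rewrite in_setU1 => /orP[/eqP Eas|HaS].
      by subst a; move/eqP: nvs; apply; apply: (no_into_s Hin).
    by move: (forallP Hf a); rewrite HaS Hva /slt Hax nax.
  case/orP: (chain Huniq Hax Hvx) => [Hav|Hva]; last by rewrite Hva in nva.
  have nav : a != v by apply: contraNneq nva => ->; exact: connect0.
  exact: (parent Huniq Hav nav He).
apply/esym/negP; rewrite inQ => /and3P[_ Hvx _].
have Hsx := connect_trans Hsv Hvx.
have nxs : s != x.
  apply/negP => /eqP Esx; subst x.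
  by move/eqP: nvs; apply; apply: (no_into_s Hin).
have Ps : s \in pancestors T (s |: S) x by rewrite inE setU11 Hsx nxs.
case: (arg_maxnP (dep T) Ps) => a Ha Hmax.
have Ha2 : a \in pancestors T (s |: S) x := Ha.
have := Hno a; rewrite Ha2 /= => /negbT/negP; apply.
apply/forallP => c; apply/implyP => Hc.
move: (Ha2) (Hc); rewrite !inE => /andP[_ /andP[Hax _]] /andP[_ /andP[Hcx _]].
case/orP: (chain Huniq Hcx Hax) => // Hac.
have [->|nac] := eqVneq a c; first exact: connect0.
have Hsa := anc_s2 Hin Huniq Hsx Hax.
move: (Hmax c Hc) (dep_lt Hin Huniq Hsa Hac nac).
move=> H1 H2; move: H2; rewrite ltnNge; by move: H1 => /= ->.
Qed.

Lemma tree_cost_eq S :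
  tree_cost k T s D S = \sum_(e in T) k e.1 e.2 *+ #|Q e.2 S|.
Proof.
rewrite /tree_cost.
under eq_bigr do rewrite Pcost_eq big_mkcondr.
rewrite exchange_big /=; apply: eq_bigr => e He.
rewrite -big_mkcondr /=.
rewrite (eq_bigl (fun x => x \in Q e.2 S)); first by rewrite sumr_const.
move=> x /=; case: (boolP (x \in S :|: D)) => Hx /=; first exact: cond_iff.
by apply/esym/negbTE; rewrite inQ (negbTE Hx).
Qed.

Hypothesis Hk : forall e, e \in T -> 0 <= k e.1 e.2.
Hypothesis HleafD : forall x, is_leaf T s x -> x \in D.

Lemma branch_info w : w \in branch_nodes T s ->
  anc s w /\ exists d, d \in D /\ anc w d /\ w != d.
Proof.
move=> Hw; have [d [Hl Hwd nwd]] := leaf_below Hin Huniq Hw.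
split; last by exists d; split; [exact: HleafD|split].
by move: Hw; rewrite inE => /andP[]; rewrite inE.
Qed.

Lemma TC_mono (S : {set V}) w : w \in branch_nodes T s ->
  tree_cost k T s D (w |: S) <= tree_cost k T s D S.
Proof.
move=> Hw; have [Hsw Hd] := branch_info Hw.
rewrite !tree_cost_eq; apply: ler_sum => e He; apply: mulrn_mono.
  exact: Hk.
exact: (Q_mono Hin Huniq e.2 S Hsw Hd).
Qed.

Lemma TC_sub (S1 S2 : {set V}) w : S1 \subset S2 -> S2 \subset branch_nodes T s ->
  w \in branch_nodes T s -> w \notin S2 ->
  tree_cost k T s D S2 - tree_cost k T s D (w |: S2)
  <= tree_cost k T s D S1 - tree_cost k T s D (w |: S1).
Proof.
move=> Hsub HS2 Hw nwS2; have [Hsw Hd] := branch_info Hw.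
have HS2' : forall y, y \in S2 -> anc s y /\ exists d, d \in D /\ anc y d /\ y != d.
  by move=> y Hy; apply: branch_info; apply: (subsetP HS2).
rewrite !tree_cost_eq -!sumrB; apply: ler_sum => e He.
have H := Q_sub Hin Huniq e.2 Hsub Hsw Hd nwS2 HS2'.
have := mulrn_mono (Hk He) H; rewrite !mulrnDr => H2; lra.
Qed.

End CostFacts.


Section Assign.
Variables (R : realFieldType) (V : finType) (E : rel V) (k : V -> V -> R)
  (b : V -> nat) (t : nat) (s : 'I_t -> V) (T : 'I_t -> {set V * V})
  (D : 'I_t -> {set V}).
Hypothesis Hk : forall u v, E u v -> 0 <= k u v.
Hypothesis Htree : forall i, is_outtree E (T i) (s i).
Hypothesis HleafD : forall i x, is_leaf (T i) (s i) x -> x \in D i.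

Local Notation zz := (z k s T D).
Local Notation TC i S := (tree_cost k (T i) (s i) (D i) S).

Definition valid (A : {set 'I_t * V}) := [forall p in A, p.2 \in Wi s T p.1].
Definition vp (p : 'I_t * V) := p.2 \in Wi s T p.1.

Lemma Ai_add (A : {set 'I_t * V}) y i :
  Ai (y |: A) i = if i == y.1 then y.2 |: Ai A i else Ai A i.
Proof.
case: y => y1 y2 /=; apply/setP => w.
case: (eqVneq i y1) => [->|ne]; rewrite !inE xpair_eqE ?eqxx //=.
by rewrite (negbTE ne).
Qed.

Lemma gain_eq (A : {set 'I_t * V}) y :
  zz (y |: A) - zz A = TC y.1 (Ai A y.1) - TC y.1 (y.2 |: Ai A y.1).
Proof.
have H1 : total_cost k s T D (y |: A) = TC y.1 (y.2 |: Ai A y.1) +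
    \sum_(i < t | i != y.1) tree_cost k (T i) (s i) (D i) (Ai A i).
  rewrite /total_cost (bigD1 y.1) //= Ai_add eqxx; congr (_ + _).
  by apply: eq_bigr => i /negbTE Hi; rewrite Ai_add Hi.
have H2 : total_cost k s T D A = TC y.1 (Ai A y.1) +
    \sum_(i < t | i != y.1) tree_cost k (T i) (s i) (D i) (Ai A i).
  by rewrite /total_cost (bigD1 y.1).
rewrite /z H1 H2; lra.
Qed.

Lemma tree_hyps i :
  [/\ forall x, (x, s i) \notin T i,
      forall x x' y, (x, y) \in T i -> (x', y) \in T i -> x = x',
      forall x y, (x, y) \in T i -> connect (trel (T i)) (s i) x
    & forall e, e \in T i -> 0 <= k e.1 e.2].
Proof.
case: (Htree i) => HE Hin Huniq Hreach; split => // e He.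
exact: Hk (HE e He).
Qed.

Lemma gain_ge0 (A : {set 'I_t * V}) y : vp y -> zz A <= zz (y |: A).
Proof.
move=> Hy; rewrite -subr_ge0 gain_eq subr_ge0.
have [Hin Huniq Hreach Hk'] := tree_hyps y.1.
exact: (TC_mono Hin Huniq Hreach Hk' (HleafD (i:=y.1))).
Qed.

Lemma gain_sub (X Y : {set 'I_t * V}) y : X \subset Y -> valid Y -> vp y ->
  y \notin Y -> zz (y |: Y) - zz Y <= zz (y |: X) - zz X.
Proof.
move=> HXY HY Hy nyY; rewrite !gain_eq.
have [Hin Huniq Hreach Hk'] := tree_hyps y.1.
apply: (TC_sub Hin Huniq Hreach Hk' (HleafD (i:=y.1))) => //.
- by apply/subsetP => w; rewrite !inE => /(subsetP HXY).
- apply/subsetP => w; rewrite inE => Hw.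
  exact: (implyP (forallP HY (y.1, w)) Hw).
- by rewrite inE -surjective_pairing.
Qed.
Lemma mono_list (X : {set 'I_t * V}) l : all vp l -> zz X <= zz (X :|: [set:: l]).
Proof.
elim: l => [|p l IH] /=; first by rewrite set_nil setU0.
move=> /andP[Hp Hl]; rewrite set_cons setUCA.
exact: le_trans (IH Hl) (gain_ge0 _ Hp).
Qed.

Lemma valid_U (X : {set 'I_t * V}) l : valid X -> all vp l -> valid (X :|: [set:: l]).
Proof.
move=> HX Hl; apply/forallP => p; apply/implyP; rewrite in_setU => /orP[Hp|Hp].
  exact: (implyP (forallP HX p) Hp).
by rewrite inE in Hp; exact: (allP Hl p Hp).
Qed.

Lemma sub_list (AG : {set 'I_t * V}) l : valid AG -> all vp l ->
  zz (AG :|: [set:: l]) <= zz AG + \sum_(o <- l) (zz (o |: AG) - zz AG).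
Proof.
move=> HAG; elim: l => [|o l IH] /=; first by rewrite set_nil setU0 big_nil addr0.
move=> /andP[Ho Hl]; rewrite set_cons setUCA big_cons.
have IH' := IH Hl.
case: (boolP (o \in AG :|: [set:: l])) => HoIn.
  rewrite (setU1_in HoIn); have := gain_ge0 AG Ho; lra.
have := gain_sub (subsetUl AG [set:: l]) (valid_U HAG Hl) Ho HoIn; lra.
Qed.

Definition cnt (A : {set 'I_t * V}) w := #|[set i | (i, w) \in A]|.

Lemma feas_valid A : feasible b s T A -> valid A.
Proof. by case/andP. Qed.

Lemma inWall p : vp p -> p.2 \in Wall s T.
Proof. by move=> Hp; apply/bigcupP; exists p.1. Qed.

Lemma feas_cnt (A : {set 'I_t * V}) w : feasible b s T A -> (cnt A w <= b w)%N.
Proof.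
move=> HA; case/andP: (HA) => Hv Hc.
case: (boolP (w \in Wall s T)) => Hw; first exact: (implyP (forallP Hc w) Hw).
suff -> : cnt A w = 0%N by [].
apply/eqP; rewrite cards_eq0; apply/eqP/setP => i; rewrite !inE.
apply/negP => Hi; move/negP: Hw; apply.
exact: (inWall (implyP (forallP Hv (i, w)) Hi)).
Qed.

Lemma cnt_add (A : {set 'I_t * V}) x w : x \notin A ->
  cnt (x |: A) w = (cnt A w + (x.2 == w))%N.
Proof.
case: x => i0 w0 /= Hx; rewrite /cnt.
case: eqVneq => [<-|ne].
  have -> : [set i | (i, w0) \in (i0, w0) |: A] = i0 |: [set i | (i, w0) \in A].
    by apply/setP => i; rewrite !inE xpair_eqE eqxx andbT.
  by rewrite cardsU1 inE (negbTE Hx) addnC.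
have -> : [set i | (i, w) \in (i0, w0) |: A] = [set i | (i, w) \in A].
  by apply/setP => i; rewrite !inE xpair_eqE (eq_sym w w0) (negbTE ne) andbF.
by rewrite addn0.
Qed.

Lemma cnt_del (O : {set 'I_t * V}) o w : o \in O ->
  cnt O w = (cnt (O :\ o) w + (o.2 == w))%N.
Proof. by move=> Ho; rewrite -{1}(setD1K Ho) cnt_add // setD11. Qed.

Lemma cnt0 w : cnt set0 w = 0%N.
Proof. by apply/eqP; rewrite cards_eq0; apply/eqP/setP => i; rewrite !inE. Qed.

Lemma feas_add (G : {set 'I_t * V}) o : feasible b s T G -> vp o -> o \notin G ->
  (cnt G o.2 < b o.2)%N -> feasible b s T (o |: G).
Proof.
case/andP => Hv Hc Ho nG Hlt; apply/andP; split.
  apply/forallP => p; apply/implyP; rewrite in_setU1 => /orP[/eqP->//|Hp].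
  exact: (implyP (forallP Hv p) Hp).
apply/forallP => w; apply/implyP => Hw.
change (cnt (o |: G) w <= b w)%N; rewrite cnt_add //.
case: eqVneq => [<-|ne]; first by rewrite addn1.
by rewrite addn0; exact: (implyP (forallP Hc w) Hw).
Qed.

Lemma feas_add_inv (G : {set 'I_t * V}) x : x \notin G -> feasible b s T (x |: G) ->
  (cnt G x.2 < b x.2)%N.
Proof.
move=> nxG Hf; have Hx := implyP (forallP (feas_valid Hf) x) (setU11 x G).
have := feas_cnt x.2 Hf; rewrite cnt_add // eqxx addn1 //.
Qed.

Lemma greedy_sub xs G AG : greedy_from k b s T D G xs AG -> feasible b s T G ->
  G \subset AG /\ feasible b s T AG.
Proof.
elim: xs G => [|x xs IH] G /=; first by case=> -> _ HG; split.
case=> Hx nxG Hf _ Hrest HG; have [H1 H2] := IH _ Hrest Hf; split=> //.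
exact: subset_trans (subsetUr _ _) H1.
Qed.

Lemma greedy_inv xs G AG : greedy_from k b s T D G xs AG -> feasible b s T G ->
  forall O, valid O -> (forall o, o \in O -> o \notin G) ->
  (forall w, cnt O w + cnt G w <= b w)%N ->
  \sum_(o in O) (zz (o |: AG) - zz AG) <= zz AG - zz G.
Proof.
elim: xs G => [|x xs IH] G /=.
  case=> EAG Hmax HG O HO HOG Hcap; subst AG.
  rewrite subrr big1 // => o Ho; exfalso.
  have Hov : vp o := implyP (forallP HO o) Ho.
  have HoN : o \in Nset s T by rewrite inE; exact: inWall.
  move/negP: (Hmax o HoN (HOG o Ho)); apply; apply: (feas_add HG Hov (HOG o Ho)).
  have := Hcap o.2; rewrite (cnt_del o.2 Ho) eqxx /=; lia.
case=> HxN nxG Hfx Hbest Hrest HG O HO HOG Hcap.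
have [HsubAG HfAG] := greedy_sub Hrest Hfx.
have HxAG : x \in AG by apply: (subsetP HsubAG); rewrite setU11.
have Hxv : vp x := implyP (forallP (feas_valid Hfx) x) (setU11 x G).
have Hg0 : zz G <= zz (x |: G) := gain_ge0 G Hxv.
have Hlt := feas_add_inv nxG Hfx.
have HvD : forall o', valid (O :\ o').
  move=> o'; apply/forallP => p; apply/implyP; rewrite in_setD1 => /andP[_ Hp].
  exact: (implyP (forallP HO p) Hp).
case: (boolP (x \in O)) => HxO.
  rewrite (big_setD1 x) //= setU1_in // subrr add0r.
  have := IH (x |: G) Hrest Hfx (O :\ x) (HvD x).
  have Hd : forall o, o \in O :\ x -> o \notin x |: G.
    move=> o; rewrite in_setD1 in_setU1 => /andP[nox Ho].
    by rewrite negb_or nox HOG.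
  move=> /(_ Hd) H.
  have : \sum_(o in O :\ x) (zz (o |: AG) - zz AG) <= zz AG - zz (x |: G).
    apply: H => w; rewrite cnt_add //; have := Hcap w; rewrite (cnt_del w HxO).
    by rewrite addnA addnAC.
  lra.
have Hd : forall o, o \in O -> o \notin x |: G.
  move=> o Ho; rewrite in_setU1 negb_or HOG // andbT.
  by apply: contraNneq HxO => <-.
case: (ltnP (cnt O x.2 + cnt G x.2) (b x.2)) => Hc.
  have : \sum_(o in O) (zz (o |: AG) - zz AG) <= zz AG - zz (x |: G).
    apply: (IH _ Hrest Hfx O HO Hd) => w; rewrite cnt_add //.
    case: (eqVneq x.2 w) => [<-|ne] /=; first by lia.
    by rewrite addn0.
  lra.
have : (0 < cnt O x.2)%N.
  rewrite lt0n; apply/negP => /eqP H0; rewrite H0 add0n in Hc.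
  by rewrite ltnNge Hc in Hlt.
move=> /card_gt0P [i]; rewrite inE => Hio.
have [o {}Hio Ho2] : exists2 o, o \in O & o.2 = x.2 by exists (i, x.2).
have Hov : vp o := implyP (forallP HO o) Hio.
have -> : \sum_(o' in O) (zz (o' |: AG) - zz AG) =
  (zz (o |: AG) - zz AG) + \sum_(o' in O :\ o) (zz (o' |: AG) - zz AG).
  by rewrite (big_setD1 o Hio).
have Hd' : forall o', o' \in O :\ o -> o' \notin x |: G.
  by move=> o'; rewrite in_setD1 => /andP[_ /Hd].
have : \sum_(o' in O :\ o) (zz (o' |: AG) - zz AG) <= zz AG - zz (x |: G).
  apply: (IH _ Hrest Hfx (O :\ o) (HvD o) Hd') => w.
  rewrite (cnt_add w nxG); have := Hcap w; rewrite (cnt_del w Hio).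
  rewrite Ho2.
  by rewrite addnA addnAC.
have : zz (o |: AG) - zz AG <= zz (x |: G) - zz G.
  case: (boolP (o \in AG)) => HoAG.
    by rewrite setU1_in // subrr subr_ge0.
  have H1 := gain_sub (subset_trans (subsetUr _ _) HsubAG) (feas_valid HfAG) Hov HoAG.
  have HoN : o \in Nset s T by rewrite inE; exact: inWall.
  have H2 := Hbest o HoN (HOG o Hio) (feas_add HG Hov (HOG o Hio) (eq_ind_r (fun u => cnt G u < b u)%N Hlt Ho2)).
  lra.
lra.
Qed.

End Assign.

Theorem theorem3 (R : realFieldType) (V : finType) (E : rel V)
  (k : V -> V -> R) (b : V -> nat) (t : nat) (s : 'I_t -> V)
  (T : 'I_t -> {set V * V}) (D : 'I_t -> {set V}) :
  (forall u v, E u v -> 0 <= k u v) ->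
  (forall i, is_outtree E (T i) (s i)) ->
  (forall i, D i \subset tnodes (T i) (s i)) ->
  (forall i x, is_leaf (T i) (s i) x -> x \in D i) ->
  forall AG : {set 'I_t * V}, greedy_output k b s T D AG ->
  forall A : {set 'I_t * V}, feasible b s T A ->
    z k s T D A / 2 <= z k s T D AG.
Proof.
move=> Hk Htree _ HleafD AG [xs Hg] A HA.
have Hf0 : feasible b s T set0.
  apply/andP; split; first by apply/forallP => p; rewrite inE.
  by apply/forallP => w; apply/implyP => _; change (cnt (set0 : {set 'I_t * V}) w <= b w)%N; rewrite cnt0.
have [HsubAG HfAG] := greedy_sub Hg Hf0.
have HOG : forall o, o \in A -> o \notin set0 by move=> o _; rewrite inE.
have Hcap : forall w : V, (cnt A w + cnt (set0 : {set 'I_t * V}) w <= b w)%N.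
  move=> w; have -> : cnt (set0 : {set 'I_t * V}) w = 0%N := cnt0 t w.
  by rewrite addn0; exact: (feas_cnt w HA).
have Hinv := greedy_inv Hk Htree HleafD Hg Hf0 (feas_valid HA) HOG Hcap.
have Hz0 : z k s T D set0 = 0 by rewrite /z subrr.
rewrite Hz0 subr0 in Hinv.
have HallAG : all (vp s T) (enum AG).
  apply/allP => p; rewrite mem_enum => Hp.
  exact: (implyP (forallP (feas_valid HfAG) p) Hp).
have HallA : all (vp s T) (enum A).
  apply/allP => p; rewrite mem_enum => Hp.
  exact: (implyP (forallP (feas_valid HA) p) Hp).
have H1 := mono_list Hk Htree HleafD A HallAG.
have H2 := sub_list Hk Htree HleafD (feas_valid HfAG) HallA.
rewrite set_enum in H1; rewrite set_enum big_enum /= in H2.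
rewrite setUC in H1.
lra.
Qed.
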